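(* Suppose Algorithm SC is run on a source function $b$ with $|b(v)|\le\deg(v)$ for all $v$, with $\alpha\in(0,1/4]$ and $T$ satisfying $\alpha^2T\ge\ln(2n+5Tn^2)$, and completes all $T$ rounds without terminating in step (4). Then $|b(v)-(B\bar f)_v|\le5\alpha\deg(v)$ for every $v\in V$.
   Context: Let $G=(V,E)$ be a unit-capacity undirected graph, $n=|V|\ge3$, every vertex of degree $\deg(v)\ge1$, each edge with a fixed arbitrary orientation; $B\in\mathbb R^{V\times E}$ is the incidence matrix (column $(u,v)$ has $+1$ in row $u$, $-1$ in row $v$, $0$ elsewhere). Algorithm SC takes $b\in\mathbb R^V$ with $|b(v)|\le\deg(v)$ for all $v$, $\alpha\in(0,1/4]$ and an integer $T\ge1$. Set $w^1_{v,+}=w^1_{v,-}=1$ for all $v$. For $i=1,\dots,T$: (1) for $\circ\in\{+,-\}$, $\tilde w^i_{v,\circ}=w^i_{v,\circ}$ if $w^i_{v,\circ}\ge n$ and $\tilde w^i_{v,\circ}=0$ otherwise; (2) $\tilde\phi^i_v=(\tilde w^i_{v,+}-\tilde w^i_{v,-})/\deg(v)$; (3) for each edge $(u,v)$, $f^i(u,v)=+1$ if $\tilde\phi^i_u>\tilde\phi^i_v$, $-1$ if $\tilde\phi^i_u<\tilde\phi^i_v$, $0$ otherwise; (4) if $\langle\tilde\phi^i,b\rangle>\langle\tilde\phi^i,Bf^i\rangle$, terminate; (5) $r^i_v=(b(v)-(Bf^i)_v)/\deg(v)$; (6) $w^{i+1}_{v,+}=w^i_{v,+}(1+\alpha r^i_v)$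 and $w^{i+1}_{v,-}=w^i_{v,-}(1-\alpha r^i_v)$. If all $T$ rounds complete, output $\bar f=\frac1T\sum_{i=1}^Tf^i$. *)

(* Defs.v *)
From HB Require Import structures.
From mathcomp Require Import all_boot all_order all_algebra.
From mathcomp Require Import reals exp.
Set Implicit Arguments. Unset Strict Implicit. Unset Printing Implicit Defensive.
Import Order.TTheory GRing.Theory Num.Theory.
Local Open Scope ring_scope.

Section AlgorithmSC.
Variables (R : realType) (V E : finType) (src dst : E -> V).

Definition simple_graph : Prop :=
  (forall e, src e != dst e) /\
  (forall e1 e2, ((src e1 == src e2) && (dst e1 == dst e2)) ||
                 ((src e1 == dst e2) && (dst e1 == src e2)) -> e1 = e2).

Definition deg (v : V) : nat := #|[set e | (src e == v) || (dst e == v)]|.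

(* Incidence matrix B applied to a flow f : E -> R. *)
Definition Bmul (f : E -> R) (v : V) : R :=
  \sum_(e : E) (((src e == v)%:R - (dst e == v)%:R) * f e).

Definition inner (x y : V -> R) : R := \sum_(v : V) x v * y v.

Variables (b : V -> R) (alpha : R).

Definition trunc (w : R) : R := if (#|V|%:R <= w) then w else 0.

Definition phit (wp wm : V -> R) (v : V) : R :=
  (trunc (wp v) - trunc (wm v)) / (deg v)%:R.

Definition flow_of (phi : V -> R) (e : E) : R :=
  if phi (dst e) < phi (src e) then 1
  else if phi (src e) < phi (dst e) then -1 else 0.

(* weights k = (w^{k+1}_+, w^{k+1}_-), i.e. weights 0 = w^1 *)
Fixpoint weights (k : nat) : (V -> R) * (V -> R) :=
  match k with
  | O => (fun _ => 1, fun _ => 1)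
  | k'.+1 =>
    let: (wp, wm) := weights k' in
    let phi := phit wp wm in
    let f := flow_of phi in
    let r := fun v => (b v - Bmul f v) / (deg v)%:R in
    (fun v => wp v * (1 + alpha * r v), fun v => wm v * (1 - alpha * r v))
  end.

(* phi_k = \tilde\phi^{k+1}, flow k = f^{k+1} *)
Definition phi_at (k : nat) : V -> R := phit (weights k).1 (weights k).2.
Definition flow (k : nat) : E -> R := flow_of (phi_at k).

(* step (4) termination test at round k+1 *)
Definition terminates_at (k : nat) : Prop :=
  inner (phi_at k) b > inner (phi_at k) (Bmul (flow k)).

Definition fbar (T : nat) (e : E) : R := (T%:R)^-1 * \sum_(i < T) flow i e.

End AlgorithmSC.

(* Main.v *)
Require Import Defs.
From HB Require Import structures.
From mathcomp Require Import all_boot all_order all_algebra.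
From mathcomp Require Import reals exp sequences ring lra.
Import Order.TTheory GRing.Theory Num.Theory.
Local Open Scope ring_scope.

Lemma expR_ge_quad (R : realType) (t : R) : 0 <= t -> 1 + t + t ^+ 2 / 2 <= expR t.
Proof.
move=> t0.
have ND : nondecreasing_seq (series (exp_coeff t)).
  by apply: nondecreasing_series => n _ _; exact: exp_coeff_ge0.
have := @nondecreasing_cvgn_le R (series (exp_coeff t)) ND (is_cvg_series_exp_coeff t) 3.
rewrite /expR; apply: le_trans.
rewrite /series /= !big_nat_recr //= big_geq // /exp_coeff /=.
by rewrite expr0 expr1 !factE /= add0r !divr1.
Qed.

Lemma expR_quad_le (R : realType) (x : R) : -(1/2) <= x -> x <= 1/2 ->
  expR (x - x ^+ 2) <= 1 + x.
Proof.
move=> h1 h2.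
have [x0|x0] := leP 0 x.
  have e := expR_ge1Dx (- (x - x ^+ 2)).
  have p : 0 < 1 - (x - x^+2) by nra.
  rewrite expRN in e.
  have ep := expR_gt0 (x - x ^+ 2).
  have H : 1 <= (1 + - (x - x ^+ 2)) * (1 + x) by nra.
  have I : expR (x - x ^+ 2) * (expR (x - x ^+ 2))^-1 = 1 by rewrite divff // lt0r_neq0.
  set y := x - x ^+ 2 in e p ep H I *.
  set z := (expR y)^-1 in e I.
  have J := ler_wpM2l (ltW ep) e; rewrite I in J.
  nra.
set t := - x.
have t0 : 0 <= t by rewrite /t; lra.
have e1 := @expR_ge_quad R t t0.
have e2 := expR_ge1Dx (t ^+ 2).
have : expR (x - x ^+2) * expR (t + t ^+ 2) = 1.
  have E : x - x ^+ 2 + (t + t ^+ 2) = 0 by rewrite /t; ring.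
  by rewrite -expRD E expR0.
have g1 := expR_gt0 t.
have g2 := expR_gt0 (t ^+ 2).
rewrite [expR (t + _)]expRD => H.
have ep := expR_gt0 (x - x ^+ 2).
have P : 1 <= (1 + x) * (expR t * expR (t ^+ 2)).
  have q : 1 <= (1 + x) * ((1 + t + t ^+ 2 / 2) * (1 + t ^+ 2)) by rewrite /t; nra.
  apply: le_trans q _.
  apply: ler_wpM2l; first lra.
  apply: ler_pM; try nra.
have := ler_wpM2l (ltW ep) P; by rewrite mulr1 mulrCA H mulr1.
Qed.

Lemma weightsS (R : realType) (V E : finType) (src dst : E -> V) (b : V -> R) (alpha : R) k :
  weights src dst b alpha k.+1 =
  (fun v => (weights src dst b alpha k).1 v * (1 + alpha * ((b v - Bmul src dst (flow src dst b alpha k) v) / (deg src dst v)%:R)),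
   fun v => (weights src dst b alpha k).2 v * (1 - alpha * ((b v - Bmul src dst (flow src dst b alpha k) v) / (deg src dst v)%:R))).
Proof. by rewrite /= /flow /phi_at; case: (weights _ _ _ _ k). Qed.

Lemma flow_of_bound (R : realType) (V E : finType) (src dst : E -> V) (phi : V -> R) e :
  `|flow_of src dst phi e| <= 1.
Proof. by rewrite /flow_of; case: ifP => _; [|case: ifP => _]; rewrite ?normrN ?normr1 ?normr0. Qed.

Lemma Bmul_bound (R : realType) (V E : finType) (src dst : E -> V) (f : E -> R) v :
  (forall e, `|f e| <= 1) -> `|Bmul src dst f v| <= (deg src dst v)%:R.
Proof.
move=> hf; rewrite /Bmul /deg -sum1_card natr_sum [X in _ <= X]big_mkcond /=.
apply: le_trans (ler_norm_sum _ _ _) _; apply: ler_sum => e _.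
rewrite inE normrM; have := hf e; have := normr_ge0 (f e).
by case: (src e == v); case: (dst e == v) => /= h1 h2;
  rewrite ?subrr ?normr0 ?mul0r ?subr0 ?sub0r ?normrN ?normr1 ?mul1r //.
Qed.

Definition rr (R : realType) (V E : finType) (src dst : E -> V) (b : V -> R) (alpha : R) k v :=
  (b v - Bmul src dst (flow src dst b alpha k) v) / (deg src dst v)%:R.
Arguments rr {R V E}.

Lemma rr_bound (R : realType) (V E : finType) (src dst : E -> V) (b : V -> R) (alpha : R) k v :
  (forall v, (1 <= deg src dst v)%N) -> (forall v, `|b v| <= (deg src dst v)%:R) ->
  `|rr src dst b alpha k v| <= 2.
Proof.
move=> hd hb; rewrite /rr normrM normfV.
have d0 : 0 < (deg src dst v)%:R :> R by rewrite ltr0n; exact: hd.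
rewrite (gtr0_norm d0) ler_pdivrMr //.
have h1 := hb v.
have h2 := @Bmul_bound R V E src dst (flow src dst b alpha k) v (fun e => @flow_of_bound _ _ _ src dst _ e).
apply: le_trans (ler_normB _ _) _; lra.
Qed.

Lemma weights_pos (R : realType) (V E : finType) (src dst : E -> V) (b : V -> R) (alpha : R) k v :
  (forall v, (1 <= deg src dst v)%N) -> (forall v, `|b v| <= (deg src dst v)%:R) ->
  0 < alpha -> alpha <= 1 / 4 ->
  0 < (weights src dst b alpha k).1 v /\ 0 < (weights src dst b alpha k).2 v.
Proof.
move=> hd hb a0 a1; elim: k v => [|k IH] v; first by split => /=; rewrite ltr01.
rewrite weightsS /=; have [h1 h2] := IH v.
have := @rr_bound R V E src dst b alpha k v hd hb.
rewrite /rr => /=; set x := (_ / _) => hx.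
have : -2 <= x <= 2 by rewrite -ler_norml.
move=> /andP [hx1 hx2].
by split; apply: mulr_gt0 => //; nra.
Qed.

Lemma trunc_diff (R : realType) (V : finType) (w : R) : 0 < w ->
  0 <= w - trunc V w <= #|V|%:R.
Proof.
move=> w0; rewrite /trunc; case: ifP => h; first by rewrite subrr lexx ler0n.
by rewrite subr0 (ltW w0) /=; apply: ltW; rewrite ltNge h.
Qed.

Lemma Phi_step (R : realType) (V E : finType) (src dst : E -> V) (b : V -> R) (alpha : R) k :
  (forall v, (1 <= deg src dst v)%N) -> (forall v, `|b v| <= (deg src dst v)%:R) ->
  0 < alpha -> alpha <= 1 / 4 -> ~ terminates_at src dst b alpha k ->
  \sum_v ((weights src dst b alpha k.+1).1 v + (weights src dst b alpha k.+1).2 v) <=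
  \sum_v ((weights src dst b alpha k).1 v + (weights src dst b alpha k).2 v) + #|V|%:R ^+ 2.
Proof.
move=> hd hb a0 a1 nt.
set wp := (weights src dst b alpha k).1; set wm := (weights src dst b alpha k).2.
set r := rr src dst b alpha k.
set tp := fun v => trunc V (wp v); set tm := fun v => trunc V (wm v).
have E1 : \sum_v ((weights src dst b alpha k.+1).1 v + (weights src dst b alpha k.+1).2 v) =
  \sum_v (wp v + wm v) + alpha * (\sum_v (tp v - tm v) * r v
       + \sum_v ((wp v - tp v) - (wm v - tm v)) * r v).
  rewrite weightsS /= -big_split /= mulr_sumr -big_split /=.
  by apply: eq_bigr => v _; rewrite /r /rr /wp /wm; ring.
have S1 : \sum_v (tp v - tm v) * r v <= 0.
  have H : inner (phi_at src dst b alpha k) b <=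
            inner (phi_at src dst b alpha k) (Bmul src dst (flow src dst b alpha k)).
    by rewrite leNgt; apply/negP.
  move: H; rewrite /inner -subr_ge0 -sumrB.
  rewrite (_ : \sum_v (tp v - tm v) * r v = - \sum_i (phi_at src dst b alpha k i * Bmul src dst (flow src dst b alpha k) i -
      phi_at src dst b alpha k i * b i)).
    by rewrite oppr_le0.
  rewrite -sumrN; apply: eq_bigr => v _.
  rewrite /r /rr /phi_at /phit /tp /tm /wp /wm.
  have : (deg src dst v)%:R != 0 :> R by rewrite pnatr_eq0 -lt0n hd.
  by move=> dn; field.
have S2 : \sum_v ((wp v - tp v) - (wm v - tm v)) * r v <= 2 * #|V|%:R ^+ 2.
  apply: le_trans (_ : \sum_(v : V) 2 * #|V|%:R <= _).
    apply: ler_sum => v _.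
    have [p1 p2] := @weights_pos R V E src dst b alpha k v hd hb a0 a1.
    have /andP [q1 q2] := @trunc_diff R V _ p1.
    have /andP [q3 q4] := @trunc_diff R V _ p2.
    have := @rr_bound R V E src dst b alpha k v hd hb.
    rewrite -/r -/wp -/wm => hr.
    apply: le_trans (ler_norm _) _.
    rewrite normrM.
    rewrite mulrC; apply: ler_pM; [exact: normr_ge0|exact: normr_ge0|exact: hr|].
    rewrite /tp /tm ler_norml; apply/andP; split; rewrite /wp /wm; last lra.
    have nn : (1 *- #|V| : R) = - #|V|%:R by [].
    rewrite nn; lra.
  by rewrite sumr_const -[X in X <= _]mulr_natr expr2 mulrA.
rewrite E1 lerD2l.
have H : \sum_v (tp v - tm v) * r v + \sum_v (wp v - tp v - (wm v - tm v)) * r v <= 2 * #|V|%:R ^+ 2 by lra.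
have := ler_wpM2l (ltW a0) H.
have := sqr_ge0 (#|V|%:R : R).
nra.
Qed.

Lemma Phi_bound (R : realType) (V E : finType) (src dst : E -> V) (b : V -> R) (alpha : R) T :
  (forall v, (1 <= deg src dst v)%N) -> (forall v, `|b v| <= (deg src dst v)%:R) ->
  0 < alpha -> alpha <= 1 / 4 -> (forall k, (k < T)%N -> ~ terminates_at src dst b alpha k) ->
  forall k, (k <= T)%N ->
  \sum_v ((weights src dst b alpha k).1 v + (weights src dst b alpha k).2 v) <=
  2 * #|V|%:R + k%:R * #|V|%:R ^+ 2.
Proof.
move=> hd hb a0 a1 nt; elim => [|k IH] kT.
  by rewrite /= sumr_const mul0r addr0 -[X in X <= _]mulr_natr (_ : 1 + 1 = 2) //.
apply: le_trans (@Phi_step R V E src dst b alpha k hd hb a0 a1 (nt k kT)) _.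
have := IH (ltnW kT); rewrite -addn1 natrD; nra.
Qed.

Lemma wp_lower (R : realType) (V E : finType) (src dst : E -> V) (b : V -> R) (alpha : R) k v :
  (forall v, (1 <= deg src dst v)%N) -> (forall v, `|b v| <= (deg src dst v)%:R) ->
  0 < alpha -> alpha <= 1 / 4 ->
  expR (\sum_(i < k) (alpha * rr src dst b alpha i v - (alpha * rr src dst b alpha i v) ^+ 2))
    <= (weights src dst b alpha k).1 v /\
  expR (\sum_(i < k) (- (alpha * rr src dst b alpha i v) - (- (alpha * rr src dst b alpha i v)) ^+ 2))
    <= (weights src dst b alpha k).2 v.
Proof.
move=> hd hb a0 a1; elim: k => [|k [IH1 IH2]].
  by rewrite !big_ord0 expR0.
rewrite weightsS /= !big_ord_recr /= ![expR (_ + (_ - _))]expRD.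
have := @rr_bound R V E src dst b alpha k v hd hb.
rewrite /rr => /=; set x := (_ / _) => hx.
have : -2 <= x <= 2 by rewrite -ler_norml.
move=> /andP [hx1 hx2].
have y1 : - (1/2) <= alpha * x by nra.
have y2 : alpha * x <= 1/2 by nra.
split; apply: ler_pM => //; try exact: expR_ge0.
all: try exact: expR_quad_le.
all: try (apply: expR_quad_le; lra).
Qed.

Theorem lemma2p6 (R : realType) (V E : finType) (src dst : E -> V)
  (b : V -> R) (alpha : R) (T : nat) :
  simple_graph src dst ->
  (3 <= #|V|)%N ->
  (forall v, (1 <= deg src dst v)%N) ->
  (forall v, `|b v| <= (deg src dst v)%:R) ->
  0 < alpha -> alpha <= 1 / 4 ->
  (1 <= T)%N ->
  ln (2 * #|V|%:R + 5 * T%:R * #|V|%:R ^+ 2) <= alpha ^+ 2 * T%:R ->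
  (forall k, (k < T)%N -> ~ terminates_at src dst b alpha k) ->
  forall v, `|b v - Bmul src dst (fbar src dst b alpha T) v|
            <= 5 * alpha * (deg src dst v)%:R.
Proof.
move=> _ V3 hd hb a0 a1 T1 hln nt v.
have n0 : 0 < #|V|%:R :> R by rewrite ltr0n; apply: leq_trans V3.
have T0 : 0 < T%:R :> R by rewrite ltr0n.
have d0 : 0 < (deg src dst v)%:R :> R by rewrite ltr0n; exact: hd.
have PhiT := @Phi_bound R V E src dst b alpha T hd hb a0 a1 nt T (leqnn T).
have Wle : (weights src dst b alpha T).1 v + (weights src dst b alpha T).2 v <=
    \sum_v ((weights src dst b alpha T).1 v + (weights src dst b alpha T).2 v).
  rewrite [X in _ <= X](bigD1 v) //= lerDl; apply: sumr_ge0 => u _.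
  have [p1 p2] := @weights_pos R V E src dst b alpha T u hd hb a0 a1.
  by rewrite addr_ge0 // ltW.
have [p1 p2] := @weights_pos R V E src dst b alpha T v hd hb a0 a1.
have Bd : 2 * #|V|%:R + T%:R * #|V|%:R ^+ 2 <= expR (alpha ^+ 2 * T%:R).
  have pos : 0 < 2 * #|V|%:R + 5 * T%:R * #|V|%:R ^+ 2 :> R.
    by apply: ltr_pwDl => //; [rewrite mulr_gt0 | rewrite mulr_ge0 // ?exprn_ge0 // ?mulr_ge0 // ltW].
  apply: le_trans (_ : 2 * #|V|%:R + 5 * T%:R * #|V|%:R ^+ 2 <= _).
    rewrite lerD2l -mulrA ler_peMl //; last by lra.
    by rewrite mulr_ge0 // ?exprn_ge0 // ltW.
  by rewrite -{1}(lnK pos) ler_expR.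
have [L1 L2] := @wp_lower R V E src dst b alpha T v hd hb a0 a1.
set r := fun i => rr src dst b alpha i v.
have Sr2 : \sum_(i < T) r i ^+ 2 <= 4 * T%:R.
  apply: le_trans (_ : \sum_(i < T) (4 : R) <= _).
    apply: ler_sum => i _.
    have := @rr_bound R V E src dst b alpha i v hd hb; rewrite -/(r i) => h.
    have := normr_ge0 (r i); rewrite -real_normK ?num_real //; nra.
  by rewrite sumr_const card_ord mulr_natr.
have Sp : alpha * \sum_(i < T) r i - alpha ^+ 2 * \sum_(i < T) r i ^+ 2 <= alpha ^+ 2 * T%:R.
  rewrite -ler_expR; apply: le_trans Bd; apply: le_trans PhiT; apply: le_trans Wle.
  apply: le_trans (_ : (weights src dst b alpha T).1 v <= _); last by lra.
  apply: le_trans _ L1.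

  rewrite le_eqVlt; apply/orP; left; apply/eqP; congr expR.
  by rewrite !mulr_sumr -sumrB; apply: eq_bigr => i _; rewrite /r; ring.
have Sm : - (alpha * \sum_(i < T) r i) - alpha ^+ 2 * \sum_(i < T) r i ^+ 2 <= alpha ^+ 2 * T%:R.
  rewrite -ler_expR; apply: le_trans Bd; apply: le_trans PhiT; apply: le_trans Wle.
  apply: le_trans (_ : (weights src dst b alpha T).2 v <= _); last by lra.
  apply: le_trans _ L2; rewrite le_eqVlt; apply/orP; left; apply/eqP; congr expR.
  by rewrite !mulr_sumr -sumrN -sumrB; apply: eq_bigr => i _; rewrite /r; ring.
have Hs : `|\sum_(i < T) r i| <= 5 * alpha * T%:R.
  have Q := ler_wpM2l (exprn_ge0 2 (ltW a0)) Sr2.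
  have H1 : alpha * \sum_(i < T) r i <= alpha * (5 * alpha * T%:R) by nra.
  have H2 : alpha * (- \sum_(i < T) r i) <= alpha * (5 * alpha * T%:R) by nra.
  rewrite ler_pM2l // in H1; rewrite ler_pM2l // in H2.
  rewrite ler_norml; apply/andP; split; lra.
have EQ : b v - Bmul src dst (fbar src dst b alpha T) v =
    (T%:R)^-1 * (deg src dst v)%:R * \sum_(i < T) r i.
  have E2 : Bmul src dst (fbar src dst b alpha T) v =
      (T%:R)^-1 * \sum_(i < T) Bmul src dst (flow src dst b alpha i) v.
    rewrite /Bmul /fbar; under eq_bigr do rewrite mulrCA.
    rewrite -mulr_sumr; congr (_ * _).
    under eq_bigr do rewrite mulr_sumr.
    by rewrite exchange_big.
  have E3 : \sum_(i < T) r i * (deg src dst v)%:R =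
      T%:R * b v - \sum_(i < T) Bmul src dst (flow src dst b alpha i) v.
    have -> : T%:R * b v = \sum_(i < T) b v by rewrite sumr_const card_ord mulr_natl.
    rewrite -sumrB.
    apply: eq_bigr => i _; rewrite /r /rr; field; exact: lt0r_neq0.
  rewrite E2 -mulrA [_ * \sum_(i < T) r i]mulrC mulr_suml E3; field; exact: lt0r_neq0.
have Ti : 0 < (T%:R)^-1 :> R by rewrite invr_gt0.
rewrite EQ normrM normrM (ger0_norm (ltW d0)) (ger0_norm (ltW Ti)).
apply: le_trans (ler_wpM2l _ Hs) _.
  by rewrite mulr_ge0 // ?invr_ge0 ltW.
rewrite le_eqVlt; apply/orP; left; apply/eqP.
by field; rewrite lt0r_neq0.
Qed.
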